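(* Let $(H,B_1,B_2)$ be a Rota-Baxter system of Hopf algebras with descendent operation $\circ$ and cocycle $\sigma$, and let $H_1=\operatorname{Im}(\sigma)$. Then (1) $H_1\circ H_1\subseteq H_1$ and $\Delta(H_1)\subseteq H_1\otimes H_1$; (2) denoting by $\circ_1,\Delta_1,\epsilon_1$ the restrictions of $\circ,\Delta,\epsilon$ to $H_1$, $(H_1,\circ_1,1)$ is a unital algebra and $(H_1,\Delta_1,\epsilon_1)$ is a cocommutative coalgebra.
   Context: $\mathbb{F}$ is a field of characteristic $0$; Sweedler notation $\Delta(a)=a_1\otimes a_2$. A Rota-Baxter system of Hopf algebras is a triple $(H,B_1,B_2)$ where $(H,\cdot,1,\Delta,\epsilon,S)$ is a cocommutative Hopf algebra and $B_1,B_2:H\to H$ are coalgebra homomorphisms with $B_1(1)=B_2(1)=1$ such that for all $a,b\in H$: $B_1(a)B_1(b)=B_1(B_1(a_1)bS(B_2(a_2)))$ and $B_2(a)B_2(b)=B_2(B_1(a_1)bS(B_2(a_2)))$. Its descendent operation is $a\circ b=B_1(a_1)bS(B_2(a_2))$ and cocycle $\sigma(a)=B_1(a_1)S(B_2(a_2))$. *)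

(* Defs.v *)
(* Tensor products H (x) H and H (x) H (x) H are represented by
   formal finite sums (sequences of pairs/triples) taken modulo the universal
   property of the tensor product: two formal sums are equal as tensors iff
   every bilinear (resp. trilinear) map into every F-vector space takes the
   same value on them.  Relative versions (for a subspace P of H) encode
   P (x) P in the same way, using maps that are bilinear on P. *)
From HB Require Import structures.
From mathcomp Require Import all_boot all_order all_algebra.
Set Implicit Arguments. Unset Strict Implicit. Unset Printing Implicit Defensive.
Import GRing.Theory.
Local Open Scope ring_scope.

Section Tensors.
Variables (F : fieldType) (H : lmodType F).
Implicit Types (P : H -> Prop).

Definition subspace_on P :=
  P 0 /\ forall (a : F) x y, P x -> P y -> P (a *: x + y).

Definition linear_on P (W : lmodType F) (g : H -> W) :=
  forall (a : F) x y, P x -> P y -> g (a *: x + y) = a *: g x + g y.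

Definition bilin_on P (W : lmodType F) (f : H -> H -> W) :=
  (forall y, P y -> linear_on P (fun x => f x y)) /\
  (forall x, P x -> linear_on P (f x)).

Definition trilin_on P (W : lmodType F) (f : H -> H -> H -> W) :=
  [/\ forall y z, P y -> P z -> linear_on P (fun x => f x y z),
      forall x z, P x -> P z -> linear_on P (fun y => f x y z)
    & forall x y, P x -> P y -> linear_on P (f x y)].

Definition tsum2 (W : lmodType F) (f : H -> H -> W) (s : seq (H * H)) : W :=
  \sum_(p <- s) f p.1 p.2.
Definition tsum3 (W : lmodType F) (f : H -> H -> H -> W) (s : seq (H * H * H)) : W :=
  \sum_(p <- s) f p.1.1 p.1.2 p.2.

Definition tensor2_in P (s : seq (H * H)) :=
  forall p, p \in s -> P p.1 /\ P p.2.
Definition tensor3_in P (s : seq (H * H * H)) :=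
  forall p, p \in s -> [/\ P p.1.1, P p.1.2 & P p.2].

(* equality in P (x) P, resp. P (x) P (x) P  (P := everything gives H (x) H) *)
Definition teq2_on P (s t : seq (H * H)) :=
  forall (W : lmodType F) (f : H -> H -> W), bilin_on P f -> tsum2 f s = tsum2 f t.
Definition teq3_on P (s t : seq (H * H * H)) :=
  forall (W : lmodType F) (f : H -> H -> H -> W), trilin_on P f -> tsum3 f s = tsum3 f t.

Definition tscale (a : F) (s : seq (H * H)) := [seq (a *: p.1, p.2) | p <- s].
Definition tswap (s : seq (H * H)) := [seq (p.2, p.1) | p <- s].
Definition cop_left (D : H -> seq (H * H)) (s : seq (H * H)) : seq (H * H * H) :=
  flatten [seq [seq (q.1, q.2, p.2) | q <- D p.1] | p <- s].
Definition cop_right (D : H -> seq (H * H)) (s : seq (H * H)) : seq (H * H * H) :=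
  flatten [seq [seq (p.1, q.1, q.2) | q <- D p.2] | p <- s].

Record cocomm_coalgebra_on P (D : H -> seq (H * H)) (e : H -> F) : Prop := {
  coalg_subspace : subspace_on P;
  coalg_range : forall x, P x -> tensor2_in P (D x);
  coalg_D_linear : forall (a : F) x y, P x -> P y ->
      teq2_on P (D (a *: x + y)) (tscale a (D x) ++ D y);
  coalg_e_linear : forall (a : F) x y, P x -> P y -> e (a *: x + y) = a * e x + e y;
  coalg_coassoc : forall x, P x -> teq3_on P (cop_left D (D x)) (cop_right D (D x));
  coalg_counit_l : forall x, P x -> \sum_(p <- D x) e p.1 *: p.2 = x;
  coalg_counit_r : forall x, P x -> \sum_(p <- D x) e p.2 *: p.1 = x;
  coalg_cocomm : forall x, P x -> teq2_on P (D x) (tswap (D x))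
}.

End Tensors.

Section Hopf.
Variables (F : fieldType) (H : algType F).

Definition allH : H -> Prop := fun _ => True.

Record unital_algebra_on (P : H -> Prop) (m : H -> H -> H) (u : H) : Prop := {
  ualg_subspace : subspace_on P;
  ualg_unit_in : P u;
  ualg_closed : forall x y, P x -> P y -> P (m x y);
  ualg_bilin : bilin_on P m;
  ualg_assoc : forall x y z, P x -> P y -> P z -> m (m x y) z = m x (m y z);
  ualg_unit_l : forall x, P x -> m u x = x;
  ualg_unit_r : forall x, P x -> m x u = x
}.

Record cocomm_hopf (D : H -> seq (H * H)) (e : H -> F) (S : H -> H) : Prop := {
  hopf_coalg : cocomm_coalgebra_on allH D e;
  hopf_D_mul : forall x y,
      teq2_on allH (D (x * y)) [seq (p.1 * q.1, p.2 * q.2) | p <- D x, q <- D y];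
  hopf_D_one : teq2_on allH (D 1) [:: (1, 1)];
  hopf_e_mul : forall x y, e (x * y) = e x * e y;
  hopf_e_one : e 1 = 1;
  hopf_S_linear : linear_on allH S;
  hopf_antipode_l : forall x, \sum_(p <- D x) S p.1 * p.2 = e x *: 1;
  hopf_antipode_r : forall x, \sum_(p <- D x) p.1 * S p.2 = e x *: 1
}.

Record coalg_hom (D : H -> seq (H * H)) (e : H -> F) (B : H -> H) : Prop := {
  chom_linear : linear_on allH B;
  chom_D : forall x, teq2_on allH (D (B x)) [seq (B p.1, B p.2) | p <- D x];
  chom_e : forall x, e (B x) = e x
}.

Definition desc_op (D : H -> seq (H * H)) (S B1 B2 : H -> H) (a b : H) : H :=
  \sum_(p <- D a) B1 p.1 * b * S (B2 p.2).

Definition cocycle (D : H -> seq (H * H)) (S B1 B2 : H -> H) (a : H) : H :=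
  \sum_(p <- D a) B1 p.1 * S (B2 p.2).

Record RB_system (D : H -> seq (H * H)) (e : H -> F) (S B1 B2 : H -> H) : Prop := {
  rbs_hopf : cocomm_hopf D e S;
  rbs_B1_hom : coalg_hom D e B1;
  rbs_B2_hom : coalg_hom D e B2;
  rbs_B1_one : B1 1 = 1;
  rbs_B2_one : B2 1 = 1;
  rbs_B1 : forall a b, B1 a * B1 b = B1 (desc_op D S B1 B2 a b);
  rbs_B2 : forall a b, B2 a * B2 b = B2 (desc_op D S B1 B2 a b)
}.

End Hopf.

(* Main.v *)
Require Import Defs.
From HB Require Import structures.
From mathcomp Require Import all_boot all_order all_algebra.
Import GRing.Theory.
Local Open Scope ring_scope.

Module Aux.
Set Implicit Arguments. Unset Strict Implicit.

Section Gen.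
Variables (F : fieldType) (H : lmodType F).

Definition lin (W : lmodType F) (g : H -> W) :=
  forall (a : F) x y, g (a *: x + y) = a *: g x + g y.
Definition bil (W : lmodType F) (f : H -> H -> W) :=
  (forall y, lin (fun x => f x y)) /\ (forall x, lin (f x)).

Lemma linE (W : lmodType F) (g : H -> W) : linear_on (fun _ => True) g <-> lin g.
Proof. by split=> h a x y; [apply: h|move=> _ _; apply: h]. Qed.

Lemma bilE (W : lmodType F) (f : H -> H -> W) : bilin_on (fun _ => True) f <-> bil f.
Proof.
split=> [[h1 h2]|[h1 h2]]; split=> y.
- by apply/linE; apply: h1. - by apply/linE; apply: h2.
- by move=> _; apply/linE. - by move=> _; apply/linE.
Qed.

Section L.
Variables (W : lmodType F) (g : H -> W).
Hypothesis hg : lin g.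
Lemma lin0 : g 0 = 0.
Proof.
have := hg (-1) 0 0; rewrite scaler0 addr0 scaleN1r.
by move=> h; apply/eqP; rewrite -(subrr (g 0)) {1}h addrC.
Qed.
Lemma linD x y : g (x + y) = g x + g y.
Proof. by have := hg 1 x y; rewrite !scale1r. Qed.
Lemma linZ a x : g (a *: x) = a *: g x.
Proof. by have := hg a x 0; rewrite !addr0 lin0 addr0. Qed.
Lemma lin_sum I (r : seq I) (h : I -> H) : g (\sum_(i <- r) h i) = \sum_(i <- r) g (h i).
Proof.
elim: r => [|i r IH]; first by rewrite !big_nil lin0.
by rewrite !big_cons linD IH.
Qed.
End L.

Lemma lin_sumf (W : lmodType F) I (r : seq I) (G : I -> H -> W) :
  (forall i, lin (G i)) -> lin (fun x => \sum_(i <- r) G i x).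
Proof.
move=> hG a x y; rewrite scaler_sumr -big_split /=.
by apply: eq_bigr => i _; rewrite hG.
Qed.

Lemma lin_add (W : lmodType F) (g1 g2 : H -> W) : lin g1 -> lin g2 -> lin (fun x => g1 x + g2 x).
Proof.
move=> h1 h2 a x y; rewrite h1 h2 scalerDr.
by rewrite -!addrA; congr (_ + _); rewrite addrCA.
Qed.

Lemma lin_scal (W : lmodType F) (k : F) (g : H -> W) : lin g -> lin (fun x => k *: g x).
Proof. by move=> hg a x y; rewrite hg scalerDr !scalerA mulrC. Qed.

Lemma lin_comp (W : lmodType F) (h : H -> H) (g : H -> W) : lin h -> lin g -> lin (fun x => g (h x)).
Proof. by move=> hh hg a x y; rewrite hh hg. Qed.

Lemma lin_id : lin (fun x : H => x). Proof. by []. Qed.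

End Gen.


Section Hopf.
Variables (F : fieldType) (H : algType F) (D : H -> seq (H * H)) (e : H -> F)
  (S B1 B2 : H -> H).
Hypothesis RB : RB_system D e S B1 B2.

Definition tri (W : lmodType F) (G : H -> H -> H -> W) :=
  [/\ forall y z, lin (fun x => G x y z), forall x z, lin (fun y => G x y z)
    & forall x y, lin (G x y)].

Definition Dsum (W : lmodType F) (x : H) (f : H -> H -> W) := \sum_(p <- D x) f p.1 p.2.

Let hop := rbs_hopf RB.
Let coal := hopf_coalg hop.

Lemma teqA (W : lmodType F) s t (f : H -> H -> W) :
  teq2_on (@allH F H) s t -> bil f -> tsum2 f s = tsum2 f t.
Proof. by move=> h hf; apply: h; apply/bilE. Qed.

Lemma S_lin : lin S. Proof. by apply/linE; exact: (hopf_S_linear hop). Qed.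
Lemma B1_lin : lin B1. Proof. by apply/linE; exact: (chom_linear (rbs_B1_hom RB)). Qed.
Lemma B2_lin : lin B2. Proof. by apply/linE; exact: (chom_linear (rbs_B2_hom RB)). Qed.
Lemma e_lin a x y : e (a *: x + y) = a * e x + e y.
Proof. exact: (coalg_e_linear coal). Qed.
Lemma e0 : e 0 = 0.
Proof. by have := e_lin (-1) 0 0; rewrite scaler0 addr0 mulN1r addNr. Qed.
Lemma eZ a x : e (a *: x) = a * e x.
Proof. by have := e_lin a x 0; rewrite !addr0 e0 addr0. Qed.
Lemma e_sum I (r : seq I) (h : I -> H) : e (\sum_(i <- r) h i) = \sum_(i <- r) e (h i).
Proof.
elim: r => [|i r IH]; first by rewrite !big_nil e0.
by rewrite !big_cons -IH -[h i]scale1r e_lin mul1r scale1r.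
Qed.

Lemma lin_mull (c : H) : lin (fun x : H => c * x).
Proof. by move=> a x y; rewrite mulrDr -scalerAr. Qed.
Lemma lin_mulr (c : H) : lin (fun x : H => x * c).
Proof. by move=> a x y; rewrite mulrDl -scalerAl. Qed.

Lemma bil_fst (W : lmodType F) (f : H -> H -> W) : bil f -> forall y, lin (fun x => f x y).
Proof. by case. Qed.
Lemma bil_snd (W : lmodType F) (f : H -> H -> W) : bil f -> forall x, lin (f x).
Proof. by case. Qed.

Lemma Dsum_lin (W : lmodType F) (f : H -> H -> W) : bil f -> lin (fun x => Dsum x f).
Proof.
move=> hf a x y; rewrite /Dsum.
have := teqA (coalg_D_linear coal a (x:=x) (y:=y) I I) hf; rewrite /tsum2 => ->.
rewrite big_cat /= big_map scaler_sumr; congr (_ + _).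
by apply: eq_bigr => p _ /=; rewrite (linZ (bil_fst hf p.2)).
Qed.

Lemma Dsum_param (W : lmodType F) x (G : H -> H -> H -> W) :
  (forall u v, lin (fun a => G a u v)) -> lin (fun a => Dsum x (G a)).
Proof. by move=> hG; apply: lin_sumf => p; apply: hG. Qed.

Lemma coassoc (W : lmodType F) x (G : H -> H -> H -> W) : tri G ->
  Dsum x (fun u v => Dsum u (fun a b => G a b v)) =
  Dsum x (fun u v => Dsum v (fun a b => G u a b)).
Proof.
case=> h1 h2 h3.
have := coalg_coassoc coal (x := x) I (W := W) (f := G).
rewrite /tsum3 /cop_left /cop_right !big_flatten /= !big_map /Dsum.
have ht : trilin_on (@allH F H) G by split=> *; apply/linE; [exact: h1 | exact: h2 | exact: h3].
move/(_ ht)=> E.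
under eq_bigr => j _ do rewrite -(big_map (fun q => (q.1, q.2, j.2)) xpredT (fun i => G i.1.1 i.1.2 i.2)).
rewrite E.
by under eq_bigr => j _ do rewrite big_map.
Qed.

Lemma cocomm (W : lmodType F) x (f : H -> H -> W) : bil f ->
  Dsum x f = Dsum x (fun u v => f v u).
Proof.
by move=> hf; have := teqA (coalg_cocomm coal (x:=x) I) hf; rewrite /tsum2 /tswap big_map.
Qed.

Lemma counit_l (W : lmodType F) x (g : H -> W) : lin g ->
  g x = Dsum x (fun u v => e u *: g v).
Proof.
move=> hg; rewrite -{1}(coalg_counit_l coal (x:=x) I) (lin_sum hg).
by apply: eq_bigr => p _; rewrite (linZ hg).
Qed.

Lemma counit_r (W : lmodType F) x (g : H -> W) : lin g ->
  g x = Dsum x (fun u v => e v *: g u).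
Proof.
move=> hg; rewrite -{1}(coalg_counit_r coal (x:=x) I) (lin_sum hg).
by apply: eq_bigr => p _; rewrite (linZ hg).
Qed.

Lemma Dmul (W : lmodType F) x y (f : H -> H -> W) : bil f ->
  Dsum (x * y) f = Dsum x (fun a b => Dsum y (fun c d => f (a * c) (b * d))).
Proof.
move=> hf; have := teqA (hopf_D_mul hop x y) hf.
by rewrite /tsum2 /Dsum => ->; rewrite big_allpairs_dep.
Qed.

Lemma Done (W : lmodType F) (f : H -> H -> W) : bil f -> Dsum 1 f = f 1 1.
Proof.
by move=> hf; have := teqA (hopf_D_one hop) hf; rewrite /tsum2 /Dsum => ->; rewrite big_seq1.
Qed.

Lemma antipode_l (W : lmodType F) x (g : H -> W) : lin g ->
  Dsum x (fun u v => g (S u * v)) = e x *: g 1.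
Proof.
by move=> hg; rewrite -(linZ hg) -(hopf_antipode_l hop x) (lin_sum hg).
Qed.

Lemma antipode_r (W : lmodType F) x (g : H -> W) : lin g ->
  Dsum x (fun u v => g (u * S v)) = e x *: g 1.
Proof.
by move=> hg; rewrite -(linZ hg) -(hopf_antipode_r hop x) (lin_sum hg).
Qed.

Lemma Dhom B (W : lmodType F) x (f : H -> H -> W) : coalg_hom D e B -> bil f ->
  Dsum (B x) f = Dsum x (fun u v => f (B u) (B v)).
Proof.
move=> hB hf.
have := teqA (chom_D hB x) hf.
by rewrite /tsum2 /Dsum => ->; rewrite big_map.
Qed.

Lemma e_hom B x : coalg_hom D e B -> e (B x) = e x.
Proof. by move=> hB; apply: (chom_e hB). Qed.

Lemma e_mul x y : e (x * y) = e x * e y. Proof. exact: hopf_e_mul hop x y. Qed.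
Lemma e_one : e 1 = 1. Proof. exact: hopf_e_one hop. Qed.

Lemma Dsum_eq (W : lmodType F) x (f g : H -> H -> W) :
  (forall u v, f u v = g u v) -> Dsum x f = Dsum x g.
Proof. by move=> h; apply: eq_bigr => p _; apply: h. Qed.

Lemma lin_Smull c : lin (fun x => c * S x).
Proof. exact: lin_comp S_lin (lin_mull c). Qed.
Lemma lin_mulSr c : lin (fun x => x * S c).
Proof. exact: lin_mulr. Qed.

Lemma RI (W : lmodType F) k (g : H -> H -> W) : bil g ->
  Dsum k (fun a b => Dsum a (fun a1 a2 => Dsum b (fun b1 b2 => g (a1 * S b2) (a2 * S b1))))
  = e k *: g 1 1.
Proof.
move=> hg.
rewrite (coassoc k (G := fun a1 a2 b => Dsum b (fun b1 b2 => g (a1 * S b2) (a2 * S b1)))); last first.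
  split=> *.
  - by apply: Dsum_param => u v; apply: lin_comp (lin_mulr _) (bil_fst hg _).
  - by apply: Dsum_param => u v; apply: lin_comp (lin_mulr _) (bil_snd hg _).
  - apply: Dsum_lin; split=> z.
    + by apply: lin_comp (lin_Smull _) (bil_snd hg _).
    + by apply: lin_comp (lin_Smull _) (bil_fst hg _).
transitivity (Dsum k (fun a1 c => g (a1 * S c) 1)); last first.
  by rewrite (antipode_r k (g := fun z => g z 1)) //; apply: bil_fst.
apply: Dsum_eq => a1 c.
rewrite -(coassoc c (G := fun a2 b1 b2 => g (a1 * S b2) (a2 * S b1))); last first.
  split=> *.
  - by apply: lin_comp (lin_mulr _) (bil_snd hg _).
  - by apply: lin_comp (lin_Smull _) (bil_snd hg _).
  - by apply: lin_comp (lin_Smull _) (bil_fst hg _).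
rewrite (counit_l c (g := fun b2 => g (a1 * S b2) 1)); last first.
  by apply: lin_comp (lin_Smull _) (bil_fst hg _).
apply: Dsum_eq => d b2.
by rewrite (antipode_r d (g := fun z => g (a1 * S b2) z)) //; apply: bil_snd.
Qed.

Lemma Dsum_swap (W : lmodType F) x y (f : H -> H -> H -> H -> W) :
  Dsum x (fun u v => Dsum y (fun a b => f u v a b)) =
  Dsum y (fun a b => Dsum x (fun u v => f u v a b)).
Proof. exact: exchange_big. Qed.

Lemma DsumZ (W : lmodType F) x (k : F) (f : H -> H -> W) :
  k *: Dsum x f = Dsum x (fun u v => k *: f u v).
Proof. exact: scaler_sumr. Qed.

Lemma lin_Dsum_arg (W : lmodType F) (h : H -> H) (f : H -> H -> W) :
  lin h -> bil f -> lin (fun a => Dsum (h a) f).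
Proof. by move=> hh hf; apply: lin_comp hh (Dsum_lin hf). Qed.

Lemma lin_mul3 (c d : H) : lin (fun x => c * (x * d)).
Proof. exact: lin_comp (lin_mulr _) (lin_mull _). Qed.
Lemma lin_mul3S (c d : H) : lin (fun x => c * (d * S x)).
Proof. exact: lin_comp (lin_Smull _) (lin_mull _). Qed.

Lemma SA (W : lmodType F) h (f : H -> H -> W) : bil f ->
  Dsum (S h) f = Dsum h (fun u v => f (S u) (S v)).
Proof.
move=> hf.
have f1 := bil_fst hf; have f2 := bil_snd hf.
rewrite (counit_r h (g := fun a => Dsum (S a) f)); last exact: lin_Dsum_arg S_lin hf.
pose G a b' c' := Dsum b' (fun a1 a2 => Dsum c' (fun b1 b2 =>
   Dsum (S a) (fun t1 t2 => f (t1 * (a1 * S b2)) (t2 * (a2 * S b1))))).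
transitivity (Dsum h (fun a b => Dsum b (fun b' c' => G a b' c'))).
  apply: Dsum_eq => a b.
  have := RI b (g := fun x y => Dsum (S a) (fun t1 t2 => f (t1 * x) (t2 * y))).
  rewrite !(Dsum_eq _ (g := f) (f := fun t1 t2 => f (t1 * 1) (t2 * 1))); last by move=> *; rewrite !mulr1.
  move=> <-.
  - by [].
  - split=> z.
    + by apply: Dsum_param => u v; apply: lin_comp (lin_mull _) (f1 _).
    + by apply: Dsum_param => u v; apply: lin_comp (lin_mull _) (f2 _).
have hG : tri G.
  rewrite /G; split=> *.
  - apply: Dsum_param => ? ?; apply: Dsum_param => ? ?. apply: (lin_Dsum_arg (h := S) (f := fun t1 t2 => f (t1 * _) (t2 * _)) S_lin).
    by split=> ?; [apply: lin_comp (lin_mulr _) (f1 _) | apply: lin_comp (lin_mulr _) (f2 _)].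
  - apply: Dsum_lin; split=> ?.
    + apply: Dsum_param => ? ?; apply: Dsum_param => ? ?; exact: lin_comp (lin_mul3 _ _) (f1 _).
    + apply: Dsum_param => ? ?; apply: Dsum_param => ? ?; exact: lin_comp (lin_mul3 _ _) (f2 _).
  - apply: Dsum_param => ? ?; apply: Dsum_lin; split=> ?.
    + apply: Dsum_param => ? ?; exact: lin_comp (lin_mul3S _ _) (f2 _).
    + apply: Dsum_param => ? ?; exact: lin_comp (lin_mul3S _ _) (f1 _).
rewrite -(coassoc h hG).
pose K c' x y := Dsum c' (fun b1 b2 => f (x * S b2) (y * S b1)).
have hK c' : bil (K c').
  split=> ?; apply: Dsum_param => ? ?.
  - exact: lin_comp (lin_mulr _) (f1 _).
  - exact: lin_comp (lin_mulr _) (f2 _).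
transitivity (Dsum h (fun m c' => e m *: K c' 1 1)).
  eapply Dsum_eq; intros m c'.
  rewrite -(Done (hK c')) -(antipode_l m (g := fun z => Dsum z (K c'))); last exact: Dsum_lin.
  apply: Dsum_eq => a b'.
  rewrite Dmul //; symmetry; rewrite Dsum_swap /G; apply: Dsum_eq => a1 a2.
  rewrite /K Dsum_swap; apply: Dsum_eq => b1 b2; apply: Dsum_eq => t1 t2.
  by rewrite !mulrA.
rewrite -(counit_l h (g := fun c' => K c' 1 1)); last first.
  apply: Dsum_lin; split=> ?.
  - exact: lin_comp (lin_Smull _) (f2 _).
  - exact: lin_comp (lin_Smull _) (f1 _).
rewrite /K cocomm; first by apply: Dsum_eq => u v; rewrite !mul1r.
split=> ?.
- exact: lin_comp (lin_Smull _) (f2 _).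
- exact: lin_comp (lin_Smull _) (f1 _).
Qed.

Lemma lin_LR (L R : H) (h : H -> H) : lin h -> lin (fun z => L * h z * R).
Proof. by move=> hh; apply: lin_comp hh (lin_comp (lin_mull L) (lin_mulr R)). Qed.

Lemma SM x y : S (x * y) = S y * S x.
Proof.
have Sl := S_lin.
symmetry.
rewrite (counit_l x (g := fun z => S y * S z)); last exact: lin_comp Sl (lin_mull _).
transitivity (Dsum x (fun a b => Dsum y (fun c d =>
   Dsum a (fun a1 a2 => Dsum c (fun c1 c2 => S (a1 * c1) * (a2 * c2) * (S d * S b)))))).
  apply: Dsum_eq => a b.
  rewrite (counit_l y (g := fun z => S z * S b)); last exact: lin_comp Sl (lin_mulr _).
  rewrite DsumZ; apply: Dsum_eq => c d.
  rewrite scalerA -e_mul.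
  rewrite -{1}[S d * S b]mul1r -(antipode_l (a * c) (g := fun z => z * (S d * S b))); last exact: lin_mulr.
  rewrite Dmul //; split=> ?.
  - exact: lin_comp Sl (lin_comp (lin_mulr _) (lin_mulr _)).
  - exact: lin_comp (lin_mull _) (lin_mulr _).
transitivity (Dsum x (fun a b => Dsum a (fun a1 a2 => Dsum y (fun c d =>
   Dsum c (fun c1 c2 => S (a1 * c1) * (a2 * c2) * (S d * S b)))))).
  by apply: Dsum_eq => a b; rewrite Dsum_swap.
rewrite (coassoc x (G := fun a1 a2 b => Dsum y (fun c d =>
   Dsum c (fun c1 c2 => S (a1 * c1) * (a2 * c2) * (S d * S b))))); last first.
  split=> *; apply: Dsum_param => ? ?; apply: Dsum_param => ? ?.
  - exact: lin_comp (lin_comp (lin_mulr _) Sl) (lin_comp (lin_mulr _) (lin_mulr _)).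
  - exact: lin_LR (lin_mulr _).
  - exact: lin_comp Sl (lin_comp (lin_mull _) (lin_mull _)).
transitivity (Dsum x (fun a1 p => Dsum y (fun c1 q => e q *: (e p *: S (a1 * c1))))).
  apply: Dsum_eq => a1 p.
  rewrite Dsum_swap.
  transitivity (Dsum y (fun c d => Dsum c (fun c1 c2 =>
     Dsum p (fun a2 b => S (a1 * c1) * (a2 * c2) * (S d * S b))))).
    by apply: Dsum_eq => c d; rewrite Dsum_swap.
  rewrite (coassoc y (G := fun c1 c2 d =>
     Dsum p (fun a2 b => S (a1 * c1) * (a2 * c2) * (S d * S b)))); last first.
    split=> *; apply: Dsum_param => ? ?.
    - exact: lin_comp (lin_comp (lin_mull _) Sl) (lin_comp (lin_mulr _) (lin_mulr _)).
    - exact: lin_LR (lin_mull _).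
    - exact: lin_comp Sl (lin_comp (lin_mulr _) (lin_mull _)).
  apply: Dsum_eq => c1 q.
  rewrite Dsum_swap.
  transitivity (Dsum p (fun a2 b => e q *: (S (a1 * c1) * (a2 * S b)))).
    apply: Dsum_eq => a2 b.
    have -> : S (a1 * c1) * (a2 * S b) = S (a1 * c1) * a2 * 1 * S b by rewrite mulr1 mulrA.
    have := antipode_r q (g := fun z => S (a1 * c1) * a2 * z * S b) (lin_LR _ _ (@lin_id F H)).
    move=> /= <-.
    by apply: Dsum_eq => c2 d; rewrite !mulrA.
  rewrite -DsumZ (antipode_r p (g := fun z => S (a1 * c1) * z)); last exact: lin_mull.
  by rewrite mulr1.
rewrite (counit_r x (g := fun z => S (z * y))); last exact: lin_comp (lin_mulr _) Sl.
apply: Dsum_eq => a1 p.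
rewrite (counit_r y (g := fun z => S (a1 * z))); last exact: lin_comp (lin_mull _) Sl.
rewrite DsumZ; apply: Dsum_eq => c1 q.
by rewrite !scalerA mulrC.
Qed.

Definition quad (W : lmodType F) (G : H -> H -> H -> H -> W) :=
  [/\ forall b c d, lin (fun a => G a b c d), forall a c d, lin (fun b => G a b c d),
      forall a b d, lin (fun c => G a b c d) & forall a b c, lin (fun d => G a b c d)].

Lemma NF (W : lmodType F) x (G : H -> H -> H -> H -> W) : quad G ->
  Dsum x (fun p q => Dsum p (fun a1 a2 => Dsum q (fun b1 b2 => G a1 a2 b1 b2))) =
  Dsum x (fun a1 r => Dsum r (fun s b2 => Dsum s (fun a2 b1 => G a1 a2 b1 b2))).
Proof.
case=> g1 g2 g3 g4.
rewrite (coassoc x (G := fun a1 a2 q => Dsum q (fun b1 b2 => G a1 a2 b1 b2))); last first.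
  split.
  - by move=> *; apply: Dsum_param => *; exact: g1.
  - by move=> *; apply: Dsum_param => *; exact: g2.
  - by move=> *; apply: Dsum_lin; split=> *; [exact: g3 | exact: g4].
apply: Dsum_eq => a1 r.
rewrite (coassoc r (G := fun a2 b1 b2 => G a1 a2 b1 b2)) //.
Qed.

Lemma MS (W : lmodType F) x (G : H -> H -> H -> H -> W) : quad G ->
  Dsum x (fun p q => Dsum p (fun a1 a2 => Dsum q (fun b1 b2 => G a1 a2 b1 b2))) =
  Dsum x (fun p q => Dsum p (fun a1 a2 => Dsum q (fun b1 b2 => G a1 b1 a2 b2))).
Proof.
move=> hG; have hG' : quad (fun a1 a2 b1 b2 => G a1 b1 a2 b2).
  by case: hG => g1 g2 g3 g4; split=> *; [exact: g1|exact: g3|exact: g2|exact: g4].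
rewrite (NF _ hG) (NF _ hG'); apply: Dsum_eq => a1 r; apply: Dsum_eq => s b2.
rewrite (cocomm s (f := fun a2 b1 => G a1 a2 b1 b2)) //.
by case: hG => g1 g2 g3 g4; split=> *; [exact: g2|exact: g3].
Qed.

Notation dsc := (desc_op D S B1 B2).
Notation sig := (cocycle D S B1 B2).

Lemma dscE a b : dsc a b = Dsum a (fun u v => B1 u * b * S (B2 v)).
Proof. by []. Qed.
Lemma sigE a : sig a = Dsum a (fun u v => B1 u * S (B2 v)).
Proof. by []. Qed.

Lemma dsc_lin1 b : lin (fun a => dsc a b).
Proof.
apply: (Dsum_lin (f := fun u v => B1 u * b * S (B2 v))); split=> ?.
- exact: lin_comp B1_lin (lin_comp (lin_mulr _) (lin_mulr _)).
- exact: lin_comp B2_lin (lin_comp S_lin (lin_mull _)).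
Qed.
Lemma dsc_lin2 a : lin (dsc a).
Proof. by apply: lin_sumf => p; exact: (lin_LR _ _ (@lin_id F H)). Qed.

Lemma Kdesc (W : lmodType F) x y (f : H -> H -> W) : bil f ->
  Dsum (dsc x y) f = Dsum x (fun a b => Dsum y (fun c d => f (dsc a c) (dsc b d))).
Proof.
move=> hf; have f1 := bil_fst hf; have f2 := bil_snd hf.
have B1l := B1_lin; have B2l := B2_lin; have Sl := S_lin.
rewrite {1}/desc_op (lin_sum (Dsum_lin hf)) -/(Dsum _ _).
pose G4 a1 a2 b1 b2 := Dsum y (fun c d => f (B1 a1 * c * S (B2 b1)) (B1 a2 * d * S (B2 b2))).
transitivity (Dsum x (fun p1 p2 => Dsum p1 (fun a1 a2 => Dsum p2 (fun b1 b2 => G4 a1 a2 b1 b2)))).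
  apply: eq_bigr => [[p1 p2]] _ /=.
  rewrite Dmul //.
  rewrite Dmul; last first.
    split=> ?; apply: Dsum_param => ? ?.
    - exact: lin_comp (lin_mulr _) (f1 _).
    - exact: lin_comp (lin_mulr _) (f2 _).
  rewrite (Dhom _ (rbs_B1_hom RB)); last first.
    split=> ?; apply: Dsum_param => ? ?; apply: Dsum_param => ? ?.
    - exact: lin_comp (lin_comp (lin_mulr _) (lin_mulr _)) (f1 _).
    - exact: lin_comp (lin_comp (lin_mulr _) (lin_mulr _)) (f2 _).
  apply: Dsum_eq => a1 a2.
  rewrite /G4; symmetry; rewrite Dsum_swap; symmetry; apply: Dsum_eq => c d.
  rewrite SA; last first.
    split=> ?.
    - exact: lin_comp (lin_mull _) (f1 _).
    - exact: lin_comp (lin_mull _) (f2 _).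
  rewrite (Dhom _ (rbs_B2_hom RB)) //.
  split=> ?.
  - exact: lin_comp (lin_comp Sl (lin_mull _)) (f1 _).
  - exact: lin_comp (lin_comp Sl (lin_mull _)) (f2 _).
rewrite MS; last first.
  rewrite /G4; split=> *; apply: Dsum_param => ? ?.
  - exact: lin_comp (lin_comp B1l (lin_comp (lin_mulr _) (lin_mulr _))) (f1 _).
  - exact: lin_comp (lin_comp B1l (lin_comp (lin_mulr _) (lin_mulr _))) (f2 _).
  - exact: lin_comp (lin_comp B2l (lin_comp Sl (lin_mull _))) (f1 _).
  - exact: lin_comp (lin_comp B2l (lin_comp Sl (lin_mull _))) (f2 _).
apply: Dsum_eq => a b.
symmetry.
transitivity (Dsum y (fun c d => Dsum a (fun a1 a2 => Dsum b (fun b1 b2 =>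
   f (B1 a1 * c * S (B2 a2)) (B1 b1 * d * S (B2 b2)))))).
  apply: Dsum_eq => c d.
  rewrite dscE /Dsum (lin_sum (f1 _)); apply: eq_bigr => i _.
  by rewrite /desc_op (lin_sum (f2 _)).
rewrite Dsum_swap; apply: Dsum_eq => a1 a2.
by rewrite Dsum_swap.
Qed.

Lemma S1 : S 1 = 1.
Proof.
have := antipode_l 1 (g := id) (@lin_id F H).
by rewrite Done /= ?mulr1 ?e_one ?scale1r //; split=> ?; [apply: lin_comp S_lin (lin_mulr _) | apply: lin_mull].
Qed.

Lemma dsc_assoc x y z : dsc (dsc x y) z = dsc x (dsc y z).
Proof.
rewrite dscE Kdesc; last first.
  split=> ?.
  - exact: lin_comp B1_lin (lin_comp (lin_mulr _) (lin_mulr _)).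
  - exact: lin_comp B2_lin (lin_comp S_lin (lin_mull _)).
rewrite dscE; apply: Dsum_eq => a b.
rewrite dscE /Dsum mulr_sumr mulr_suml.
apply: eq_bigr => p _ /=.
by rewrite -(rbs_B1 RB) -(rbs_B2 RB) SM !mulrA.
Qed.

Lemma dsc_x1 x : dsc x 1 = sig x.
Proof. by rewrite dscE sigE; apply: Dsum_eq => u v; rewrite mulr1. Qed.

Lemma dsc_1x x : dsc 1 x = x.
Proof.
rewrite dscE Done ?(rbs_B1_one RB) ?(rbs_B2_one RB) ?S1 ?mul1r ?mulr1 //.
split=> ?.
- exact: lin_comp B1_lin (lin_comp (lin_mulr _) (lin_mulr _)).
- exact: lin_comp B2_lin (lin_comp S_lin (lin_mull _)).
Qed.

Lemma sig1 : sig 1 = 1.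
Proof. by rewrite -dsc_x1 dsc_1x. Qed.

Lemma sig_dsc a b : sig (dsc a b) = dsc a (sig b).
Proof. by rewrite -!dsc_x1 dsc_assoc. Qed.

Lemma sig_idem a : sig (sig a) = sig a.
Proof. by have := sig_dsc a 1; rewrite sig1 !dsc_x1. Qed.

Lemma sig_lin : lin sig.
Proof. move=> a x y; rewrite -!dsc_x1; exact: dsc_lin1. Qed.

Lemma Dsig (W : lmodType F) u (f : H -> H -> W) : bil f ->
  Dsum (sig u) f = Dsum u (fun a b => f (sig a) (sig b)).
Proof.
move=> hf; rewrite -dsc_x1 Kdesc //; apply: Dsum_eq => a b.
rewrite Done ?dsc_x1 //; split=> ?.
- exact: lin_comp (dsc_lin2 _) (bil_fst hf _).
- exact: lin_comp (dsc_lin2 _) (bil_snd hf _).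
Qed.

Lemma eS x : e (S x) = e x.
Proof.
have h1 := antipode_l x (g := id) (@lin_id F H).
have h2 := counit_r x S_lin.
have := congr1 e h1; rewrite /Dsum e_sum eZ e_one mulr1 => <-.
rewrite h2 /Dsum e_sum; apply: eq_bigr => p _; by rewrite eZ e_mul mulrC.
Qed.

Lemma e_sig u : e (sig u) = e u.
Proof.
rewrite sigE /Dsum e_sum.
have := congr1 e (counit_l u (@lin_id F H)); rewrite /Dsum e_sum => ->.
by apply: eq_bigr => p _; rewrite e_mul eS (e_hom _ (rbs_B1_hom RB)) (e_hom _ (rbs_B2_hom RB)) eZ.
Qed.

End Hopf.

End Aux.
Import Aux.


Theorem mainTheorem9 (F : fieldType) (charF0 : [pchar F] =i pred0)
  (H : algType F) (D : H -> seq (H * H)) (e : H -> F) (S B1 B2 : H -> H) :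
  RB_system D e S B1 B2 ->
  let H1 : H -> Prop := fun x => exists a, x = cocycle D S B1 B2 a in
  (* (1) *)
  ((forall x y, H1 x -> H1 y -> H1 (desc_op D S B1 B2 x y)) /\
   (forall x, H1 x -> exists s, tensor2_in H1 s /\ teq2_on (@allH F H) (D x) s)) /\
  (* (2) *)
  (unital_algebra_on H1 (desc_op D S B1 B2) 1 /\
   exists D1 : H -> seq (H * H),
     (forall x, H1 x -> teq2_on (@allH F H) (D x) (D1 x)) /\
     cocomm_coalgebra_on H1 D1 e).
Proof.
move=> RB H1.
have coal := hopf_coalg (rbs_hopf RB).
have hsig a : H1 ((cocycle D S B1 B2) a) by exists a.
have idem x : H1 x -> (cocycle D S B1 B2) x = x by case=> a ->; exact: sig_idem RB a.
have sigl := sig_lin RB.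
have sub : subspace_on H1.
  split; first by exists 0; rewrite (lin0 sigl).
  by move=> a _ _ [x ->] [y ->]; exists (a *: x + y); rewrite sigl.
have closed x y : H1 x -> H1 y -> H1 ((desc_op D S B1 B2) x y).
  by case=> a -> [b ->]; rewrite -(sig_dsc RB); apply: hsig.
pose D1 x := [seq ((cocycle D S B1 B2) p.1, (cocycle D S B1 B2) p.2) | p <- D x].
have D1E (W : lmodType F) x (f : H -> H -> W) :
    tsum2 f (D1 x) = Dsum D x (fun u v => f ((cocycle D S B1 B2) u) ((cocycle D S B1 B2) v)).
  by rewrite /tsum2 big_map.
have range x : tensor2_in H1 (D1 x).
  by move=> p /mapP [q _ ->] /=; split; apply: hsig.
have bilsig (W : lmodType F) (f : H -> H -> W) : bil f -> bil (fun u v => f ((cocycle D S B1 B2) u) ((cocycle D S B1 B2) v)).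
  by case=> f1 f2; split=> ?; [exact: lin_comp sigl (f1 _) | exact: lin_comp sigl (f2 _)].
have teqD1 x : H1 x -> teq2_on (@allH F H) (D x) (D1 x).
  case=> a -> W f /bilE hf.
  rewrite D1E /tsum2 -/(Dsum D _ _) !(Dsig RB) //; last exact: bilsig.
  by apply: Dsum_eq => u v; rewrite !(sig_idem RB).
have bilH1 (W : lmodType F) (f : H -> H -> W) : bilin_on H1 f ->
    bil (fun u v => f ((cocycle D S B1 B2) u) ((cocycle D S B1 B2) v)).
  case=> f1 f2; split=> v a x y; rewrite sigl.
  - by apply: f1 => //; apply: hsig.
  - by apply: f2 => //; apply: hsig.
have f1Z (W : lmodType F) (f : H -> H -> W) : bilin_on H1 f ->
    forall a s t, H1 s -> H1 t -> f (a *: s) t = a *: f s t.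
  case=> f1 _ a s t hs ht.
  have H10 : H1 0 by case: sub.
  have f0 : f 0 t = 0.
    have := f1 t ht (-1) 0 0 H10 H10; rewrite scaler0 addr0 scaleN1r.
    by move=> h; apply/eqP; rewrite -(subrr (f 0 t)) {1}h addrC.
  by have := f1 t ht a s 0 hs H10; rewrite !addr0 f0 addr0.
split.
  split=> //.
  by move=> x hx; exists (D1 x); split; [apply: range | apply: teqD1].
split.
  split=> //.
  - by rewrite -(sig1 RB); apply: hsig.
  - split=> x _ a y z _ _.
    + exact: (dsc_lin1 RB x a y z).
    + exact: (dsc_lin2 D S B1 B2 x a y z).
  - by move=> x y z _ _ _; apply: (dsc_assoc RB).
  - by move=> x _; apply: (dsc_1x RB).
  - by move=> x hx; rewrite (dsc_x1 D S B1 B2) idem.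
exists D1; split=> //.
split=> //.
- move=> a x y _ _ W f hf.
  rewrite D1E (Dsum_lin RB (bilH1 _ _ hf)) /tsum2 big_cat /= !big_map.
  congr (_ + _); rewrite scaler_sumr; apply: eq_bigr => p _.
  by rewrite (f1Z _ _ hf) //; apply: hsig.
- by move=> a x y _ _; apply: (e_lin RB).
- move=> x hx W f [f1 f2 f3].
  pose G a b c := f ((cocycle D S B1 B2) a) ((cocycle D S B1 B2) b) ((cocycle D S B1 B2) c).
  have hG : tri G.
    split=> b c a u v; rewrite /G sigl.
    + by apply: f1 => //; apply: hsig.
    + by apply: f2 => //; apply: hsig.
    + by apply: f3 => //; apply: hsig.
  rewrite /tsum3 /cop_left /cop_right !big_flatten /= /D1 !big_map /=.
  transitivity (Dsum D x (fun u v => Dsum D (cocycle D S B1 B2 u) (fun a b => f (cocycle D S B1 B2 a) (cocycle D S B1 B2 b) (cocycle D S B1 B2 v)))).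
    by apply: eq_bigr => p _; rewrite !big_map.
  transitivity (Dsum D x (fun u v => Dsum D (cocycle D S B1 B2 v) (fun a b => f (cocycle D S B1 B2 u) (cocycle D S B1 B2 a) (cocycle D S B1 B2 b)))); last first.
    by apply: eq_bigr => p _; rewrite !big_map.
  transitivity (Dsum D x (fun u v => Dsum D u (fun a b => G a b v))).
    apply: Dsum_eq => u v; rewrite (Dsig RB).
      by apply: Dsum_eq => a b; rewrite /G !(sig_idem RB).
    by split=> ? ? ? ?; rewrite sigl; [apply: f1 | apply: f2] => //; apply: hsig.
  rewrite (coassoc RB) //.
  apply: Dsum_eq => u v; rewrite (Dsig RB).
    by apply: Dsum_eq => a b; rewrite /G !(sig_idem RB).
  by split=> ? ? ? ?; rewrite sigl; [apply: f2 | apply: f3] => //; apply: hsig.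
- move=> x hx; rewrite big_map /=.
  transitivity (cocycle D S B1 B2 (\sum_(p <- D x) e p.1 *: p.2)); last first.
    by rewrite (coalg_counit_l coal (x:=x) I) idem.
  rewrite (lin_sum sigl); by apply: eq_bigr => p _; rewrite (e_sig RB) (linZ sigl).
- move=> x hx; rewrite big_map /=.
  transitivity (cocycle D S B1 B2 (\sum_(p <- D x) e p.2 *: p.1)); last first.
    by rewrite (coalg_counit_r coal (x:=x) I) idem.
  rewrite (lin_sum sigl); by apply: eq_bigr => p _; rewrite (e_sig RB) (linZ sigl).
- move=> x hx W f hf.
  rewrite D1E (cocomm RB) //; last exact: bilH1.
  by rewrite /tswap /tsum2 !big_map.
Qed.
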